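(* For every set $X\subseteq\omega$ there is a family $(A_f)_{f\in 2^\omega}$ of infinite subsets of $\omega$ such that for all distinct $f,g\in 2^\omega$, the sets $A_f$ and $A_g$ are $X$ bi-immune.
   Context: For $X,A,B\subseteq\omega$, $A$ and $B$ are called $X$ bi-immune if for every partial $X$-computable function $h$ with infinite range there is some $a\in A$ with $h(a)$ defined and $h(a)\notin B$, and there is some $b\in B$ with $h(b)$ defined and $h(b)\notin A$. *)

(* Defs.v *)
From Stdlib Require Import List Arith.
Import ListNotations.

(* Sets of naturals (and elements of 2^omega) are characteristic functions. *)
Definition natset := nat -> bool.

Inductive prog : Type :=
| PZero : prog
| PSucc : prog
| PProj : nat -> prog
| POracle : prog
| PComp : prog -> progs -> prog
| PRec : prog -> prog -> prog
| PMu : prog -> prog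
with progs : Type :=
| PNil : progs
| PCons : prog -> progs -> progs.

Inductive eval (X : natset) : prog -> list nat -> nat -> Prop :=
| ev_zero : forall v, eval X PZero v 0
| ev_succ : forall v, eval X PSucc v (S (hd 0 v))
| ev_proj : forall i v, eval X (PProj i) v (nth i v 0)
| ev_oracle : forall v, eval X POracle v (if X (hd 0 v) then 1 else 0)
| ev_comp : forall f gs v ws y,
    evals X gs v ws -> eval X f ws y -> eval X (PComp f gs) v y
| ev_rec0 : forall f g v y, eval X f v y -> eval X (PRec f g) (0 :: v) y
| ev_recS : forall f g n v y z,
    eval X (PRec f g) (n :: v) y -> eval X g (n :: y :: v) z ->
    eval X (PRec f g) (S n :: v) z
| ev_mu : forall f v n,
    eval X f (n :: v) 0 ->
    (forall m, m < n -> exists k, eval X f (m :: v) (S k)) ->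
    eval X (PMu f) v n
with evals (X : natset) : progs -> list nat -> list nat -> Prop :=
| evs_nil : forall v, evals X PNil v nil
| evs_cons : forall g gs v w ws,
    eval X g v w -> evals X gs v ws -> evals X (PCons g gs) v (w :: ws).

Definition phi (X : natset) (p : prog) (a y : nat) : Prop := eval X p [a] y.

Definition infinite_range (X : natset) (p : prog) : Prop :=
  forall N, exists a y, N <= y /\ phi X p a y.

Definition infinite_set (A : natset) : Prop :=
  forall N, exists a, N <= a /\ A a = true.

Definition bi_immune (X A B : natset) : Prop :=
  forall p : prog, infinite_range X p ->
    (exists a y, A a = true /\ phi X p a y /\ B y = false) /\
    (exists b y, B b = true /\ phi X p b y /\ A y = false).

(* Main.v *)
Require Import Defs.
From Stdlib Require Import List Arith Lia Cantor Classical ClassicalEpsilon FunctionalExtensionality.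
Import ListNotations.

Scheme prog_mut := Induction for prog Sort Prop
with progs_mut := Induction for progs Sort Prop.

Lemma eval_det (X : natset) : forall p, forall v y y', eval X p v y -> eval X p v y' -> y = y'.
Proof.
  apply (prog_mut (fun p => forall v y y', eval X p v y -> eval X p v y' -> y = y')
                  (fun gs => forall v ws ws', evals X gs v ws -> evals X gs v ws' -> ws = ws')).
  - intros v y y' H H'; inversion H; inversion H'; subst; auto.
  - intros v y y' H H'; inversion H; inversion H'; subst; auto.
  - intros i v y y' H H'; inversion H; inversion H'; subst; auto.
  - intros v y y' H H'; inversion H; inversion H'; subst; auto.
  - intros f IHf gs IHgs v y y' H H'; inversion H; inversion H'; subst.
    assert (ws = ws0) by eauto. subst. eauto.
  - intros f IHf g IHg v y y' H H'.
    destruct v as [|n v]; [inversion H|].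
    revert y y' H H'; induction n; intros y y' H H'.
    + inversion H; inversion H'; subst; eauto.
    + inversion H; inversion H'; subst.
      assert (y0 = y1) by eauto. subst. eauto.
  - intros f IHf v y y' H H'; inversion H; inversion H'; subst.
    destruct (lt_eq_lt_dec y y') as [[Hl|]|Hl]; auto.
    + destruct (H7 _ Hl) as [k Hk]. specialize (IHf _ _ _ H1 Hk). discriminate.
    + destruct (H2 _ Hl) as [k Hk]. specialize (IHf _ _ _ H6 Hk). discriminate.
  - intros v ws ws' H H'; inversion H; inversion H'; auto.
  - intros g IHg gs IHgs v ws ws' H H'; inversion H; inversion H'; subst.
    f_equal; eauto.
Qed.

Definition pr (a b : nat) := Cantor.to_nat (a, b).
Lemma pr_inj a b c d : pr a b = pr c d -> a = c /\ b = d.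
Proof. intro H. assert (E := f_equal Cantor.of_nat H). unfold pr in E.
  rewrite !Cantor.cancel_of_to in E. inversion E; auto. Qed.

Fixpoint encp (p : prog) : nat :=
  match p with
  | PZero => pr 0 0 | PSucc => pr 1 0 | PProj i => pr 2 i | POracle => pr 3 0
  | PComp f gs => pr 4 (pr (encp f) (encps gs))
  | PRec f g => pr 5 (pr (encp f) (encp g))
  | PMu f => pr 6 (encp f)
  end
with encps (gs : progs) : nat :=
  match gs with PNil => pr 0 0 | PCons g gs => pr 1 (pr (encp g) (encps gs)) end.

Ltac dinj H := simpl in H; apply pr_inj in H; let H1 := fresh in let H2 := fresh in destruct H as [H1 H2]; try discriminate.
Lemma encp_inj : forall p q, encp p = encp q -> p = q.
Proof.
  apply (prog_mut (fun p => forall q, encp p = encp q -> p = q)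
                  (fun gs => forall hs, encps gs = encps hs -> gs = hs)).
  - intros q H; destruct q; dinj H; reflexivity.
  - intros q H; destruct q; dinj H; reflexivity.
  - intros i q H; destruct q; dinj H; subst; reflexivity.
  - intros q H; destruct q; dinj H; reflexivity.
  - intros f IHf gs IHgs q H; destruct q; dinj H; match goal with K : pr _ _ = pr _ _ |- _ => apply pr_inj in K; destruct K end; f_equal; auto.
  - intros f IHf g IHg q H; destruct q; dinj H; match goal with K : pr _ _ = pr _ _ |- _ => apply pr_inj in K; destruct K end; f_equal; auto.
  - intros f IHf q H; destruct q; dinj H; f_equal; auto.
  - intros hs H; destruct hs; dinj H; reflexivity.
  - intros g IHg gs IHgs hs H; destruct hs; dinj H; match goal with K : pr _ _ = pr _ _ |- _ => apply pr_inj in K; destruct K end; f_equal; auto.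
Qed.
Fixpoint encl (l : list bool) : nat :=
  match l with [] => 0 | b :: l => S (pr (if b then 1 else 0) (encl l)) end.
Lemma encl_inj : forall l m, encl l = encl m -> l = m.
Proof.
  induction l as [|b l IH]; intros [|c m] H; simpl in H; try discriminate; auto.
  injection H as H. apply pr_inj in H as [H1 H2].
  f_equal; [destruct b, c; simpl in H1; congruence | auto].
Qed.

Definition triple := (prog * list bool * list bool)%type.
Definition code (t : triple) : nat :=
  let '(p, s, u) := t in pr (encp p) (pr (encl s) (encl u)).
Lemma code_inj t t' : code t = code t' -> t = t'.
Proof.
  destruct t as [[p s] u], t' as [[p' s'] u']; simpl; intro H.
  apply pr_inj in H as [H1 H2]; apply pr_inj in H2 as [H2 H3].
  apply encp_inj in H1; apply encl_inj in H2; apply encl_inj in H3; subst; auto.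
Qed.

Definition req (n : nat) : option triple :=
  match excluded_middle_informative (exists t, code t = n) with
  | left H => Some (proj1_sig (constructive_indefinite_description _ H))
  | right _ => None
  end.
Lemma req_code t : req (code t) = Some t.
Proof.
  unfold req. destruct excluded_middle_informative as [H|H].
  - destruct constructive_indefinite_description as [t' Ht']; simpl. f_equal. now apply code_inj.
  - exfalso; eauto.
Qed.

Definition prefix (s : list bool) (f : natset) := forall i, i < length s -> nth i s false = f i.
Definition incomp (s u : list bool) := exists i, i < length s /\ i < length u /\ nth i s false <> nth i u false.

Lemma incomp_prefix s u g : incomp s u -> prefix s g -> prefix u g -> False.
Proof. intros [i [H1 [H2 H3]]] P Q. rewrite P, Q in H3; auto. Qed.

Lemma bound_list X p : forall L : list nat, exists N, forall a y, In a L -> phi X p a y -> y < N.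
Proof.
  induction L as [|a L [N HN]].
  - exists 0; intros a y [].
  - destruct (classic (exists y, phi X p a y)) as [[y0 Hy0]|Hn].
    + exists (Nat.max N (S y0)). intros b y [<-|Hin] Hp.
      * assert (y = y0) by (eapply eval_det; eauto). lia.
      * specialize (HN _ _ Hin Hp). lia.
    + exists N. intros b y [<-|Hin] Hp; [exfalso; eauto | eauto].
Qed.

Lemma pick_exists X p B L : infinite_range X p ->
  exists ay : nat * nat, phi X p (fst ay) (snd ay) /\ B < snd ay /\ ~ In (fst ay) L.
Proof.
  intro Hinf. destruct (bound_list X p L) as [N HN].
  destruct (Hinf (N + S B)) as [a [y [Hy Hp]]].
  exists (a, y); simpl; repeat split; auto; try lia.
  intro Hin; specialize (HN _ _ Hin Hp); lia.
Qed.

Record st := mkst { Bd : nat; Res : list nat }.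

Definition active X n : Prop :=
  match req n with Some (p, s, u) => incomp s u /\ infinite_range X p | None => False end.
Definition reqp n := match req n with Some (p, _, _) => p | None => PZero end.

Definition choice_at X (s : st) (n : nat) : option (nat * nat) :=
  match excluded_middle_informative (active X n) with
  | left H =>
    match excluded_middle_informative (exists ay : nat * nat, phi X (reqp n) (fst ay) (snd ay) /\ Bd s < snd ay /\ ~ In (fst ay) (Res s)) with
    | left E => Some (proj1_sig (constructive_indefinite_description _ E))
    | right _ => None
    end
  | right _ => None
  end.

Definition next (s : st) (c : option (nat * nat)) : st :=
  match c with
  | None => mkst (S (Bd s)) (Res s)
  | Some (a, y) => mkst (S (Nat.max (Bd s) (Nat.max a y))) (y :: Res s)
  end.

Fixpoint stn X (n : nat) : st :=
  match n with 0 => mkst 0 [] | S m => next (stn X m) (choice_at X (stn X m) m) end.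

Definition ch X n := choice_at X (stn X n) n.

Lemma ch_spec X n a y : ch X n = Some (a, y) ->
  active X n /\ phi X (reqp n) a y /\ Bd (stn X n) < y /\ ~ In a (Res (stn X n)).
Proof.
  unfold ch, choice_at. destruct excluded_middle_informative as [H|H]; [|discriminate].
  destruct excluded_middle_informative as [E|E]; [|discriminate].
  destruct constructive_indefinite_description as [[a' y'] P]; simpl in *.
  intro K; injection K as -> ->; tauto.
Qed.

Lemma ch_active X n : active X n -> exists a y, ch X n = Some (a, y).
Proof.
  intro H. unfold ch, choice_at. destruct excluded_middle_informative as [_|Hn]; [|tauto].
  destruct excluded_middle_informative as [E|E].
  - destruct constructive_indefinite_description as [[a y] P]; simpl; exists a, y; reflexivity.
  - exfalso; apply E. apply pick_exists. unfold active, reqp in *.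
    destruct (req n) as [[[p s] u]|]; tauto.
Qed.

Lemma Bd_S X n : Bd (stn X n) < Bd (stn X (S n)).
Proof. simpl. fold (ch X n). destruct (ch X n) as [[a y]|]; simpl; lia. Qed.

Lemma Bd_mono X m n : m <= n -> Bd (stn X m) <= Bd (stn X n).
Proof. induction 1; auto. pose proof (Bd_S X m0); lia. Qed.

Lemma Bd_ge X n : n <= Bd (stn X n).
Proof. induction n; simpl; [lia|]. pose proof (Bd_S X n); simpl in *; lia. Qed.

Lemma ch_bound X n a y : ch X n = Some (a, y) -> a < Bd (stn X (S n)) /\ y < Bd (stn X (S n)).
Proof. intro H. simpl. fold (ch X n). rewrite H. simpl. lia. Qed.

Lemma Res_in X m n a y : m < n -> ch X m = Some (a, y) -> In y (Res (stn X n)).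
Proof.
  induction 1 as [|n Hmn IH]; intro H.
  - simpl. fold (ch X m). rewrite H. simpl. auto.
  - simpl. fold (ch X n). destruct (ch X n) as [[a' y']|]; simpl; auto.
Qed.

Definition lab n := match req n with Some (_, s, u) => (s, u) | None => ([], []) end.

Definition Pmem X (f : natset) (x : nat) : Prop :=
  exists n, x = Bd (stn X n) \/ exists y, ch X n = Some (x, y) /\ prefix (fst (lab n)) f.

Definition Afam X (f : natset) (x : nat) : bool :=
  if excluded_middle_informative (Pmem X f x) then true else false.

Lemma Afam_true X f x : Afam X f x = true <-> Pmem X f x.
Proof. unfold Afam; destruct excluded_middle_informative; split; auto; discriminate. Qed.

Lemma y_out X m a y g : ch X m = Some (a, y) -> prefix (snd (lab m)) g -> ~ Pmem X g y.
Proof.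
  intros Hm Pg [n [Hn|[y' [Hc Pf]]]].
  - destruct (ch_spec X m a y Hm) as [_ [_ [Hb _]]].
    destruct (ch_bound X m a y Hm) as [_ Hb2].
    destruct (le_lt_dec n m).
    + pose proof (Bd_mono X n m l); lia.
    + pose proof (Bd_mono X (S m) n l); lia.
  - destruct (lt_eq_lt_dec n m) as [[Hl|He]|Hl].
    + destruct (ch_bound X n y y' Hc) as [H1 _].
      pose proof (Bd_mono X (S n) m Hl). destruct (ch_spec X m a y Hm) as [_ [_ [Hb _]]]. lia.
    + subst. destruct (ch_spec X m a y Hm) as [Ha _].
      unfold active, lab in *. destruct (req m) as [[[p s] u]|]; [|tauto].
      simpl in *. eapply incomp_prefix; [apply Ha|eauto|eauto].
    + destruct (ch_spec X n y y' Hc) as [_ [_ [_ Hnot]]]. apply Hnot. eapply Res_in; eauto.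
Qed.

Lemma key X p s u f g : incomp s u -> infinite_range X p -> prefix s f -> prefix u g ->
  exists a y, Afam X f a = true /\ phi X p a y /\ Afam X g y = false.
Proof.
  intros Hi Hinf Pf Pg.
  set (n := code (p, s, u)).
  assert (Ha : active X n) by (unfold active, n; rewrite req_code; auto).
  destruct (ch_active X n Ha) as [a [y Hc]].
  assert (Hl : lab n = (s, u)) by (unfold lab, n; rewrite req_code; auto).
  assert (Hp : reqp n = p) by (unfold reqp, n; rewrite req_code; auto).
  exists a, y. repeat split.
  - apply Afam_true. exists n. right. exists y. rewrite Hl; auto.
  - destruct (ch_spec X n a y Hc) as [_ [H _]]. now rewrite Hp in H.
  - destruct (Afam X g y) eqn:E; auto. apply Afam_true in E.
    exfalso. eapply y_out; eauto. rewrite Hl; auto.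
Qed.

Theorem lemma4p2 : forall X : natset,
  exists Afam : natset -> natset,
    (forall f : natset, infinite_set (Afam f)) /\
    (forall f g : natset, f <> g -> bi_immune X (Afam f) (Afam g)).
Proof.
  intro X. exists (Afam X). split.
  - intros f N. exists (Bd (stn X N)). split; [apply Bd_ge|].
    apply Afam_true. exists N; auto.
  - intros f g Hfg.
    assert (Hex : exists i, f i <> g i).
    { apply NNPP; intro Hn. apply Hfg. apply functional_extensionality; intro i.
      apply NNPP; intro Hi; apply Hn; eauto. }
    destruct Hex as [i Hi].
    set (s := map f (seq 0 (S i))). set (u := map g (seq 0 (S i))).
    assert (Hpre : forall h j, j < length (map h (seq 0 (S i))) -> nth j (map h (seq 0 (S i))) false = h j).
    { intros h j Hj. rewrite length_map, length_seq in Hj.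
      rewrite nth_indep with (d' := h 0) by (rewrite length_map, length_seq; lia).
      rewrite map_nth, seq_nth by lia. reflexivity. }
    assert (Hsu : incomp s u).
    { exists i. unfold s, u. rewrite !length_map, !length_seq. repeat split; try lia.
      rewrite !Hpre by (rewrite length_map, length_seq; lia). auto. }
    assert (Hus : incomp u s).
    { destruct Hsu as [j [A [B C]]]. exists j; repeat split; auto. }
    intros p Hinf. split.
    + apply (key X p s u f g Hsu Hinf); intros j Hj; apply Hpre; auto.
    + apply (key X p u s g f Hus Hinf); intros j Hj; apply Hpre; auto.
Qed.
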